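(* Let $q$ be a prime power, let $n_1,n_2,n_3,n_4$ be positive integers with $n=n_1+n_2+n_3+n_4$, and let $G=U_{n_1,n_2,n_3,n_4}=1+\mathfrak{g}$ be the unipotent radical of the standard parabolic subgroup of $\mathrm{GL}_n(\mathbb{F}_q)$ attached to the block sizes $(n_1,n_2,n_3,n_4)$. Here $\mathfrak{g}$ is the algebra of $n\times n$ matrices over $\mathbb{F}_q$ which, written in $4\times 4$ block form $(X_{ij})$ with $X_{ij}$ of size $n_i\times n_j$, satisfy $X_{ij}=0$ whenever $i\ge j$. Then $G$ is of good type: for every $S\in\mathfrak{g}^t$, the linear form $\lambda_S\in\mathfrak{g}^*$, $\lambda_S(X)=\operatorname{tr}(SX)$, admits an associative polarization.
   Context: $\mathfrak{g}^t=\{X^t: X\in\mathfrak{g}\}$. For $\lambda\in\mathfrak{g}^*$, define the skew-symmetric bilinear form $B_\lambda(x,y)=\lambda(xy-yx)$ on $\mathfrak{g}$. A subspace $\mathfrak{p}\subseteq\mathfrak{g}$ is isotropic if $B_\lambda(x,y)=0$ for all $x,y\in\mathfrak{p}$, and a polarization of $\lambda$ is a maximal isotropic subspace of $\mathfrak{g}$ for $B_\lambda$. An associative polarization of $\lambda$ is a polarization $\mathfrak{p}$ that is an associative subalgebra of $\mathfrak{g}$ and satisfies $\lambda(\mathfrak{p}^2)=0$, where $\mathfrak{p}^2$ is the span of products $xy$ with $x,y\in\mathfrak{p}$. A pattern group $G=1+\mathfrak{g}$ over $\mathbb{F}_q$ is said to be of good type if $\lambda_S$ admits an associative polarization for every $S\in\mathfrak{g}^t$.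 *)

(* Defs.v *)
From HB Require Import structures.
From mathcomp Require Import all_boot all_order all_algebra all_field.
Set Implicit Arguments. Unset Strict Implicit. Unset Printing Implicit Defensive.
Import GRing.Theory.
Local Open Scope ring_scope.

Section Defs.
Variables (F : fieldType) (n : nat).
Notation mat := 'M[F]_(n, n).

Definition lamS (S X : mat) : F := \tr (S *m X).

Definition Blam (lam : mat -> F) (x y : mat) : F := lam (x *m y - y *m x).

Definition subspace_of (g : mat -> Prop) (p : {vspace mat}) : Prop :=
  forall x, x \in p -> g x.

Definition isotropic (lam : mat -> F) (p : {vspace mat}) : Prop :=
  forall x y, x \in p -> y \in p -> Blam lam x y = 0.

Definition polarization (g : mat -> Prop) (lam : mat -> F) (p : {vspace mat}) :=
  [/\ subspace_of g p, isotropic lam p &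
      forall p' : {vspace mat}, subspace_of g p' -> isotropic lam p' ->
        (p <= p')%VS -> p' = p].

Definition assoc_polarization (g : mat -> Prop) (lam : mat -> F) (p : {vspace mat}) :=
  [/\ polarization g lam p,
      (forall x y, x \in p -> y \in p -> x *m y \in p) &
      (forall x y, x \in p -> y \in p -> lam (x *m y) = 0)].

Definition good_type (g : mat -> Prop) : Prop :=
  forall S : mat, (exists X, g X /\ S = X^T) ->
    exists p : {vspace mat}, assoc_polarization g (lamS S) p.
End Defs.

Definition blk4 (n1 n2 n3 n4 : nat) (k : nat) : nat :=
  if (k < n1)%N then 0%N
  else if (k < n1 + n2)%N then 1%N
  else if (k < n1 + n2 + n3)%N then 2%N
  else 3%N.

Definition u4alg (F : fieldType) (n1 n2 n3 n4 : nat)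
  (X : 'M[F]_(n1 + n2 + n3 + n4, n1 + n2 + n3 + n4)) : Prop :=
  forall i j : 'I_(n1 + n2 + n3 + n4),
    (blk4 n1 n2 n3 n4 j <= blk4 n1 n2 n3 n4 i)%N -> X i j = 0.

(* Main.v *)
Require Import Defs.
From HB Require Import structures.
From mathcomp Require Import all_boot all_order all_algebra all_field.
From Stdlib Require Import ClassicalEpsilon.
Set Implicit Arguments. Unset Strict Implicit. Unset Printing Implicit Defensive.
Import GRing.Theory.
Local Open Scope ring_scope.

Section Proof.
Variables (F : finFieldType) (n1 n2 n3 n4 : nat).
Local Notation N := (n1 + n2 + n3 + n4)%N.
Local Notation M := 'M[F]_N.

Definition blk (i : 'I_N) : nat := blk4 n1 n2 n3 n4 i.
Lemma blk_lt4 i : (blk i < 4)%N.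
Proof. by rewrite /blk /blk4; repeat case: ifP. Qed.

Definition P (k : nat) : M := diag_mx (\row_(i < N) ((blk i == k)%:R : F)).

Lemma PE_r k (A : M) r s : (A *m P k) r s = A r s * (blk s == k)%:R.
Proof. by rewrite /P mul_mx_diag !mxE. Qed.

Definition supp (K : nat -> nat -> bool) (X : M) :=
  forall r s : 'I_N, ~~ K (blk r) (blk s) -> X r s = 0.

Lemma supp_mul (K1 K2 K3 : nat -> nat -> bool) (X Y : M) :
  (forall a b c, (a < 4)%N -> (b < 4)%N -> (c < 4)%N -> K1 a b -> K2 b c -> K3 a c) ->
  supp K1 X -> supp K2 Y -> supp K3 (X *m Y).
Proof.
move=> H hX hY r s nK; rewrite mxE big1 // => j _.
have [h1|h1] := boolP (K1 (blk r) (blk j)); last by rewrite hX // mul0r.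
have [h2|h2] := boolP (K2 (blk j) (blk s)); last by rewrite hY // mulr0.
by rewrite (H _ _ _ (blk_lt4 r) (blk_lt4 j) (blk_lt4 s) h1 h2) in nK.
Qed.

Lemma supp_P k : supp (fun a b => (a == k) && (b == k)) (P k).
Proof.
move=> r s; rewrite /P !mxE; case: (r =P s) => [<-|]; last by rewrite mulr0n.
by rewrite andbb => /negbTE ->; rewrite mulr1n.
Qed.

Arguments supp_P : clear implicits.

Lemma supp0 (X : M) : supp (fun _ _ => false) X -> X = 0.
Proof. by move=> h; apply/matrixP => r s; rewrite mxE h. Qed.

Lemma mul0K (K1 K2 : nat -> nat -> bool) (X Y : M) :
  (forall a b c, (a < 4)%N -> (b < 4)%N -> (c < 4)%N -> K1 a b -> K2 b c -> false) ->
  supp K1 X -> supp K2 Y -> X *m Y = 0.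
Proof. by move=> H hX hY; apply: supp0; apply: supp_mul hX hY. Qed.

Lemma supp_weak (K K' : nat -> nat -> bool) (X : M) : (forall a b, (a < 4)%N -> (b < 4)%N -> K a b -> K' a b) ->
  supp K X -> supp K' X.
Proof.
move=> H hX r s nK; apply: hX; apply: contra nK; exact: H (blk_lt4 _) (blk_lt4 _).
Qed.

Lemma supp_Pl k (K : nat -> nat -> bool) (X : M) : supp K X -> supp (fun a b => (a == k) && K a b) (P k *m X).
Proof.
move=> hX; apply: (@supp_mul _ _ (fun a b => (a == k) && K a b) _ _ _ (supp_P k) hX).
by move=> a b c _ _ _ /andP[/eqP -> /eqP ->] h; rewrite eqxx h.
Qed.

Lemma supp_Pr k (K : nat -> nat -> bool) (X : M) : supp K X -> supp (fun a b => K a b && (b == k)) (X *m P k).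
Proof.
move=> hX; apply: (@supp_mul _ _ (fun a b => K a b && (b == k)) _ _ _ hX (supp_P k)).
by move=> a b c _ _ _ h /andP[/eqP <- /eqP ->]; rewrite eqxx h.
Qed.

Arguments supp_Pl k [K X].
Arguments supp_Pr k [K X].

Lemma supp_lin (K : nat -> nat -> bool) k (X Y : M) : supp K X -> supp K Y -> supp K (k *: X + Y).
Proof. by move=> hX hY r s nK; rewrite !mxE hX // hY // mulr0 addr0. Qed.

Lemma Psum : P 0 + P 1 + P 2 + P 3 = 1%:M.
Proof.
apply/matrixP => r s; rewrite /P !mxE; case: (r =P s) => _; last by rewrite !mulr0n !addr0.
by have := blk_lt4 r; case: (blk r) => [|[|[|[|b]]]] //= _; rewrite !mulr1n ?addr0 ?add0r.
Qed.

Lemma mul_split (X Y : M) :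
  X *m Y = X *m P 0 *m Y + X *m P 1 *m Y + X *m P 2 *m Y + X *m P 3 *m Y.
Proof. by rewrite -{1}(mulmx1 X) -Psum !mulmxDr !mulmxDl. Qed.

Lemma mul_mid k (K1 K2 : nat -> nat -> bool) (X Y : M) :
  (forall a b c, (a < 4)%N -> (b < 4)%N -> (c < 4)%N -> K1 a b -> K2 b c -> b == k) ->
  supp K1 X -> supp K2 Y -> X *m P k *m Y = X *m Y.
Proof.
move=> H hX hY; apply/matrixP => r s; rewrite !mxE; apply: eq_bigr => j _.
rewrite PE_r; have [e|ne] := boolP (blk j == k); first by rewrite mulr1.
rewrite mulr0 mul0r.
have [h1|h1] := boolP (K1 (blk r) (blk j)); last by rewrite hX // mul0r.
have [h2|h2] := boolP (K2 (blk j) (blk s)); last by rewrite hY // mulr0.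
by rewrite (H _ _ _ (blk_lt4 r) (blk_lt4 j) (blk_lt4 s) h1 h2) in ne.
Qed.

Definition Kg a b := (a < b)%N.
Definition KJ a b := (a.+1 < b)%N.
Definition KL a b := (a == 0)%N && (0 < b)%N.
Definition KR a b := (b == 3)%N && (a < 3)%N.

Ltac sc3 := rewrite /Kg /KJ /KL /KR;
  move=> [|[|[|[|?]]]] [|[|[|[|?]]]] [|[|[|[|?]]]] //.
Ltac sc2 := rewrite /Kg /KJ /KL /KR;
  move=> [|[|[|[|?]]]] [|[|[|[|?]]]] //.

Variable S : M.
Local Notation L := (lamS S).

Lemma LD A B : L (A + B) = L A + L B.
Proof. by rewrite /lamS mulmxDr mxtraceD. Qed.
Lemma LZ k A : L (k *: A) = k * L A.
Proof. by rewrite /lamS -scalemxAr mxtraceZ. Qed.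
Lemma L0 : L 0 = 0.
Proof. by rewrite /lamS mulmx0 mxtrace0. Qed.
Lemma LB A B : L (A - B) = L A - L B.
Proof. by rewrite /lamS mulmxBr raddfB. Qed.

Definition inR X := supp Kg X /\ forall Z, supp KJ Z -> L (X *m Z) = 0 /\ L (Z *m X) = 0.
Definition inP X := [/\ inR X,
  (forall W, inR W -> supp KL W -> L (W *m X) = 0) &
  (forall W, inR W -> supp KR W -> L (X *m W) = 0)].

Lemma J_inP Z : supp KJ Z -> inP Z.
Proof.
move=> hZ; have hR : inR Z.
  split; first by apply: supp_weak hZ; sc2.
  move=> Z' hZ'; rewrite (mul0K _ hZ hZ') ?(mul0K _ hZ' hZ) ?L0 //; sc3.
by split=> // W [_ hW] _; have [] := hW Z hZ.
Qed.

Lemma inP_mul X Y : inP X -> inP Y -> inP (X *m Y).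
Proof.
move=> [[gX _] _ _] [[gY _] _ _]; apply: J_inP; apply: supp_mul gX gY; sc3.
Qed.

Lemma LR0 W1 W2 : inR W1 -> supp KL W1 -> inR W2 -> supp KR W2 -> L (W1 *m W2) = 0.
Proof.
move=> [g1 R1] h1 [g2 R2] h2.
rewrite mul_split (mul0K _ h1 (supp_P 0)) ?mul0mx; last by sc3.
rewrite -[W1 *m P 3 *m W2]mulmxA (mul0K _ (supp_P 3) h2) ?mulmx0; last by sc3.
rewrite -[W1 *m P 1 *m W2]mulmxA !LD L0 add0r addr0.
have J1 : supp KJ (P 1 *m W2) by apply: supp_weak (supp_Pl 1 h2); sc2.
have J2 : supp KJ (W1 *m P 2) by apply: supp_weak (supp_Pr 2 h1); sc2.
by rewrite (R1 _ J1).1 (R2 _ J2).2 addr0.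
Qed.

Lemma inP_L X Y : inP X -> inP Y -> L (X *m Y) = 0.
Proof.
case=> [[gX RX] lX rX] [[gY RY] lY rY].
rewrite mul_split (mul0K _ gX (supp_P 0)) ?mul0mx; last by sc3.
rewrite -[X *m P 3 *m Y]mulmxA (mul0K _ (supp_P 3) gY) ?mulmx0; last by sc3.
rewrite -[X *m P 2 *m Y]mulmxA !LD L0 add0r addr0.
have sW := supp_Pl 2 gY; have sV := supp_Pr 1 gX.
have sW' : supp KR (P 2 *m Y) by apply: supp_weak sW; sc2.
have sV' : supp KL (X *m P 1) by apply: supp_weak sV; sc2.
have RW : inR (P 2 *m Y).
  split; first by apply: supp_weak sW; sc2.
  move=> Z hZ; rewrite (mul0K _ sW hZ) ?L0; last by sc3.
  split=> //; rewrite mulmxA (mul_mid _ hZ gY); last by sc3.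
  by have [] := RY Z hZ.
have RV : inR (X *m P 1).
  split; first by apply: supp_weak sV; sc2.
  move=> Z hZ; rewrite (mul0K _ hZ sV) ?L0; last by sc3.
  split=> //; rewrite (mul_mid _ gX hZ); last by sc3.
  by have [] := RX Z hZ.
by rewrite (lY _ RV sV') (rX _ RW sW') addr0.
Qed.

Lemma maxP x : supp Kg x -> (forall y, inP y -> L (x *m y - y *m x) = 0) -> inP x.
Proof.
move=> gx hw.
have WL : forall W, inR W -> supp KL W -> inP W.
  move=> W RW hW; split=> //.
    move=> W' _ hW'; rewrite (mul0K _ hW' hW) ?L0 //; sc3.
  by move=> Y RY hY; apply: LR0.
have WR : forall W, inR W -> supp KR W -> inP W.
  move=> W RW hW; split=> //.
    by move=> W' RW' hW'; apply: LR0.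
  move=> Y _ hY; rewrite (mul0K _ hW hY) ?L0 //; sc3.
have Rx : inR x.
  split=> // Z hZ; split.
    have sZ := supp_Pl 1 hZ.
    have ZJ : supp KJ (P 1 *m Z) by apply: supp_weak sZ; sc2.
    have e1 : P 1 *m Z *m x = 0 by apply: (mul0K _ sZ gx); sc3.
    have e2 : x *m (P 1 *m Z) = x *m Z by rewrite mulmxA (mul_mid _ gx hZ) //; sc3.
    by have := hw _ (J_inP ZJ); rewrite LB e1 e2 L0 subr0.
  have sZ := supp_Pr 2 hZ.
  have ZJ : supp KJ (Z *m P 2) by apply: supp_weak sZ; sc2.
  have e1 : x *m (Z *m P 2) = 0 by apply: (mul0K _ gx sZ); sc3.
  have e2 : Z *m P 2 *m x = Z *m x by rewrite (mul_mid _ hZ gx) //; sc3.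
  have := hw _ (J_inP ZJ); rewrite LB e1 e2 L0 sub0r.
  by move/eqP; rewrite oppr_eq0 => /eqP.
split=> // W RW hW.
  have e1 : x *m W = 0 by apply: (mul0K _ gx hW); sc3.
  have := hw _ (WL _ RW hW); rewrite LB e1 L0 sub0r.
  by move/eqP; rewrite oppr_eq0 => /eqP.
have e1 : W *m x = 0 by apply: (mul0K _ hW gx); sc3.
by have := hw _ (WR _ RW hW); rewrite LB e1 L0 subr0.
Qed.

Lemma inP0 : inP 0.
Proof. by apply: J_inP => r s _; rewrite mxE. Qed.

Lemma inP_lin k X Y : inP X -> inP Y -> inP (k *: X + Y).
Proof.
move=> [[gX RX] lX rX] [[gY RY] lY rY]; split; first split.
- exact: supp_lin.
- move=> Z hZ; have [a1 a2] := RX Z hZ; have [b1 b2] := RY Z hZ.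
  by rewrite mulmxDl mulmxDr -scalemxAl -scalemxAr !LD !LZ a1 a2 b1 b2 mulr0 addr0.
- by move=> W hR hW; rewrite mulmxDr -scalemxAr LD LZ lX // lY // mulr0 addr0.
- by move=> W hR hW; rewrite mulmxDl -scalemxAl LD LZ rX // rY // mulr0 addr0.
Qed.

Definition inPb X : bool := if excluded_middle_informative (inP X) then true else false.
Lemma inPbP X : reflect (inP X) (inPb X).
Proof. by rewrite /inPb; case: excluded_middle_informative => h; constructor. Qed.

Definition pP : {vspace M} := <<enum [pred X : M | inPb X]>>%VS.

Lemma span_inP (s : seq M) x : (forall y, y \in s -> inP y) -> x \in <<s>>%VS -> inP x.
Proof.
elim: s x => [|y s IH] x hs.
  by rewrite span_nil memv0 => /eqP ->; exact: inP0.
rewrite span_cons => /memv_addP[u /vlineP[k ->] [v hv ->]].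
apply: inP_lin; first by apply: hs; rewrite inE eqxx.
by apply: IH hv => z hz; apply: hs; rewrite inE hz orbT.
Qed.

Lemma memp x : (x \in pP) <-> inP x.
Proof.
split; first by apply: span_inP => y; rewrite mem_enum inE => /inPbP.
by move=> h; apply: memv_span; rewrite mem_enum inE; apply/inPbP.
Qed.

Lemma u4_supp X : u4alg X <-> supp Kg X.
Proof.
split=> h r s; rewrite /Kg.
  by rewrite -leqNgt; apply: h.
by move=> le; apply: h; rewrite -leqNgt.
Qed.

End Proof.

Theorem theorem3p2 (F : finFieldType) (n1 n2 n3 n4 : nat) :
  (0 < n1)%N -> (0 < n2)%N -> (0 < n3)%N -> (0 < n4)%N ->
  good_type (@u4alg F n1 n2 n3 n4).
Proof.
move=> _ _ _ _ S _; exists (pP S); split; first split.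
- by move=> x /memp [[gx _] _ _]; apply/u4_supp.
- by move=> x y /memp hx /memp hy; rewrite /Blam LB !inP_L // subrr.
- move=> p' sub iso hle; apply/eqP; rewrite eqEsubv hle andbT.
  apply/subvP => x hx; apply/memp; apply: maxP; first exact/u4_supp/sub.
  move=> y /memp hy; exact: iso hx (subvP hle _ hy).
- by move=> x y /memp hx /memp hy; apply/memp; apply: inP_mul.
- by move=> x y /memp hx /memp hy; apply: inP_L.
Qed.
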